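(* For every integer $k\ge1$, every $d\in\mathbb N$ and every $j\in\{1,2,3,4\}$, $$G_j(k,d)=\Big(\frac{\sqrt2}{3}\Big)^k\Big(\frac1{\sqrt2}\Big)^d\frac1{k!}\,\partial_x^k\big[g_j(x)\,z_-(\mu(x))^d\big]_{x=0}.$$
   Context: Let $\mathcal B$ be the $2$-regular Bethe lattice: the infinite tree in which every node has exactly $3$ neighbours, viewed as a metric graph with each edge isometric to $]0,1[$; $\mathrm{dist}$ is the path-length distance, $m(B)$ the midpoint of edge $B$. Each edge has two orientations; $-\vec B$ is the opposite of $\vec B$; write $\vec A\to\vec B$ when the terminal node of $\vec A$ is the initial node of $\vec B$. Define the matrix $G(1)$ indexed by oriented edges by $G(1,\vec B,\vec A)=-1/3$ if $\vec B=-\vec A$, $2/3$ if $\vec A\to\vec B$ and $\vec B\ne-\vec A$, $0$ otherwise, and $G(k)=G(1)^k$; $G(k,\vec B,\vec A)$ is the coefficient, at integer time $k$, of the Dirac mass propagating along $\vec B$ in the solution of the wave equation on $\mathcal B$ (speed $1$, Kirchhoff conditions at nodes) whose initial datum is a unit Dirac mass at $m(A)$ propagating along $\vec A$. Types of a pair $(\vec A,\vec B)$ with $d=\mathrm{dist}(m(A),m(B))\ge1$: say $\vec A$ points toward $B$ if the terminal node of $\vec A$ lies on the geodesic from $m(A)$ to $m(B)$, and $\vec B$ points away from $A$ if the initial node of $\vec B$ lies on that geodesic. Type 1: $\vec A$ toward $B$, $\vec B$ away from $A$; type 2: $\vec A$ toward $B$, $\vec B$ toward $A$; type 3: $\vec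 A$ away from $B$, $\vec B$ toward $A$; type 4: $\vec A$ away from $B$, $\vec B$ away from $A$. For $d=0$, types 1 and 3 mean $\vec B=\vec A$ and types 2 and 4 mean $\vec B=-\vec A$. $G_j(k,d)$ denotes $G(k,\vec B,\vec A)$ for any pair of type $j$ at distance $d$ (it depends only on $j,k,d$). Let $r=\sqrt2/3$, $\mu(x)=2x/(1+x^2/r^2)$, $z_-(\mu)=\frac1{2\mu}(1-\sqrt{1-4\mu^2})$ (principal branch, $z_-(0)=0$). With $z=z_-(\mu(x))$ and $D(x)=(1-\frac52xz)^2-\frac{x^2}2z^4$: $g_1=\frac{z}{2x}\frac{(1-2xz)(1-\frac52xz+\frac{x^2}2z^2)}{D}$ (extended by continuity at $0$), $g_2=-\frac{z}{2\sqrt2}\frac{1-\frac52xz+\frac{x^2}2z^2}{D}$, $g_3=\frac{xz}4\frac{1-\frac52xz+z^2}{D}$, $g_4=-\frac{z}{2\sqrt2}\frac{(1-2xz)(1-\frac52xz+z^2)}{D}$, all holomorphic near $x=0$. *)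

(* Defs.v *)
From Stdlib Require Import Reals List Arith Lia.
From Coquelicot Require Import Coquelicot.
Import ListNotations.
Open Scope R_scope.

(* The 2-regular Bethe lattice (infinite 3-regular tree), realised as  *)
(* the Cayley graph of Z/2 * Z/2 * Z/2 with generators 0,1,2.          *)
(* A node is a reduced word over {0,1,2} (no two equal consecutive      *)
(* letters), stored LAST LETTER FIRST.  Nodes w and vmul w a are joined *)
(* by an edge; every node has exactly 3 neighbours.                    *)
Definition vertex := list nat.

Fixpoint reduced (w : list nat) : Prop :=
  match w with
  | [] => True
  | a :: w' => (a < 3)%nat /\ reduced w' /\
               match w' with [] => True | b :: _ => a <> b end
  end.

Definition vmul (w : vertex) (a : nat) : vertex :=
  match w with
  | b :: w' => if Nat.eqb a b then w' else a :: w
  | [] => [a]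
  end.

Record oedge := OE { otail : vertex ; olabel : nat }.

Definition ohead (e : oedge) : vertex := vmul (otail e) (olabel e).
Definition oopp (e : oedge) : oedge := OE (ohead e) (olabel e).
Definition valid_oedge (e : oedge) : Prop :=
  reduced (otail e) /\ (olabel e < 3)%nat.

Definition oedge_eq_dec (e f : oedge) : {e = f} + {e <> f}.
Proof. decide equality; [apply Nat.eq_dec | apply (list_eq_dec Nat.eq_dec)]. Defined.

(* Path-length distance of the metric graph (edges of length 1).       *)
(* To stay in nat we use TWICE the distance (dist2 = 2 * dist).        *)
Fixpoint lcp (u v : list nat) : nat :=
  match u, v with
  | a :: u', b :: v' => if Nat.eqb a b then S (lcp u' v') else O
  | _, _ => O
  end.

Definition vdist (u v : vertex) : nat :=
  (length u + length v - 2 * lcp (rev u) (rev v))%nat.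

(* points of the metric graph we need: nodes and edge midpoints m(e) *)
Inductive point := Node (v : vertex) | Mid (e : oedge).

Definition same_edge (e f : oedge) : bool :=
  if oedge_eq_dec e f then true else if oedge_eq_dec e (oopp f) then true else false.

Definition dist2 (p q : point) : nat :=
  match p, q with
  | Node v, Node w => (2 * vdist v w)%nat
  | Node v, Mid e | Mid e, Node v =>
      (2 * Nat.min (vdist v (otail e)) (vdist v (ohead e)) + 1)%nat
  | Mid e, Mid f =>
      if same_edge e f then O
      else (2 * Nat.min (Nat.min (vdist (otail e) (otail f)) (vdist (otail e) (ohead f)))
                        (Nat.min (vdist (ohead e) (otail f)) (vdist (ohead e) (ohead f))) + 2)%nat
  end.

Definition on_geodesic (v : vertex) (p q : point) : Prop :=
  (dist2 p (Node v) + dist2 (Node v) q = dist2 p q)%nat.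

Definition points_toward (X Y : oedge) : Prop := on_geodesic (ohead X) (Mid X) (Mid Y).
Definition points_away (X Y : oedge) : Prop := on_geodesic (otail X) (Mid X) (Mid Y).

Definition pair_type (j : nat) (A B : oedge) : Prop :=
  match dist2 (Mid A) (Mid B) with
  | O => match j with
         | 1%nat | 3%nat => B = A
         | 2%nat | 4%nat => B = oopp A
         | _ => False
         end
  | _ => match j with
         | 1%nat => points_toward A B /\ points_away B A
         | 2%nat => points_toward A B /\ points_toward B A
         | 3%nat => points_away A B /\ points_toward B A
         | 4%nat => points_away A B /\ points_away B A
         | _ => False
         end
  end.

Definition G1 (B A : oedge) : R :=
  if oedge_eq_dec B (oopp A) then - (1/3)
  else if list_eq_dec Nat.eq_dec (ohead A) (otail B) then 2/3 else 0.

(* Matrix product (G(1) G(k))(B,A) = sum_{A'} G(1,B,A') G(k,A',A).  The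
   row G(1,B,.) vanishes outside the 3 oriented edges A' with terminal node
   the initial node v of B, namely A' = OE (vmul v c) c, c = 0,1,2. *)
Fixpoint G (k : nat) (B A : oedge) : R :=
  match k with
  | O => if oedge_eq_dec B A then 1 else 0
  | S k' =>
      let v := otail B in
      G1 B (OE (vmul v 0) 0) * G k' (OE (vmul v 0) 0) A
    + G1 B (OE (vmul v 1) 1) * G k' (OE (vmul v 1) 1) A
    + G1 B (OE (vmul v 2) 2) * G k' (OE (vmul v 2) 2) A
  end.

Definition rr : R := sqrt 2 / 3.
Definition mu (x : R) : R := 2 * x / (1 + x ^ 2 / rr ^ 2).
Definition z_minus (m : R) : R :=
  if Req_EM_T m 0 then 0 else (1 - sqrt (1 - 4 * m ^ 2)) / (2 * m).
Definition zz (x : R) : R := z_minus (mu x).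
Definition DD (x : R) : R :=
  (1 - 5/2 * x * zz x) ^ 2 - x ^ 2 / 2 * zz x ^ 4.

Definition g1_raw (x : R) : R :=
  zz x / (2 * x) * ((1 - 2 * x * zz x) * (1 - 5/2 * x * zz x + x ^ 2 / 2 * zz x ^ 2)) / DD x.
(* extended by continuity at 0 *)
Definition g1 (x : R) : R :=
  if Req_EM_T x 0 then real (Lim g1_raw 0) else g1_raw x.
Definition g2 (x : R) : R :=
  - (zz x / (2 * sqrt 2)) * (1 - 5/2 * x * zz x + x ^ 2 / 2 * zz x ^ 2) / DD x.
Definition g3 (x : R) : R :=
  x * zz x / 4 * (1 - 5/2 * x * zz x + zz x ^ 2) / DD x.
Definition g4 (x : R) : R :=
  - (zz x / (2 * sqrt 2)) * ((1 - 2 * x * zz x) * (1 - 5/2 * x * zz x + zz x ^ 2)) / DD x.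

Definition gj (j : nat) : R -> R :=
  match j with 1%nat => g1 | 2%nat => g2 | 3%nat => g3 | _ => g4 end.

(* Main.v *)
Require Import Defs.

From Stdlib Require Import Reals List Arith Lia.
Import ListNotations.
Local Open Scope nat_scope.

Lemma lcp_comm : forall u v, lcp u v = lcp v u.
Proof.
  induction u as [|a u IH]; destruct v as [|b v]; simpl; auto.
  rewrite (Nat.eqb_sym b a). destruct (Nat.eqb a b); auto.
Qed.

Lemma lcp_le_l : forall u v, (lcp u v <= length u)%nat.
Proof.
  induction u as [|a u IH]; destruct v as [|b v]; simpl; try lia.
  destruct (Nat.eqb a b); specialize (IH v); lia.
Qed.

Lemma lcp_le_r : forall u v, (lcp u v <= length v)%nat.
Proof. intros; rewrite lcp_comm; apply lcp_le_l. Qed.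

Lemma lcp_refl : forall u, lcp u u = length u.
Proof. induction u; simpl; auto. rewrite Nat.eqb_refl; auto. Qed.

Lemma vdist_comm : forall u v, vdist u v = vdist v u.
Proof. intros; unfold vdist; rewrite lcp_comm; lia. Qed.

Lemma vdist_refl : forall u, vdist u u = 0%nat.
Proof. intros; unfold vdist; rewrite lcp_refl, length_rev; lia. Qed.

Lemma vdist_nil_r : forall v, vdist v [] = length v.
Proof. intros; unfold vdist; simpl. destruct (rev v); simpl; lia. Qed.

Lemma vdist_nil_l : forall v, vdist [] v = length v.
Proof. intros; rewrite vdist_comm; apply vdist_nil_r. Qed.

Lemma hd_rev : forall (l : list nat) (d : nat), hd d (rev l) = last l d.
Proof.
  induction l as [|a l IH]; intros d; [reflexivity|].
  destruct l as [|b l]; [reflexivity|].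
  change (last (a :: b :: l) d) with (last (b :: l) d).
  rewrite <- IH. change (rev (a :: b :: l)) with (rev (b :: l) ++ [a]).
  destruct (rev (b :: l)) eqn:E; [|reflexivity].
  apply (f_equal (@length nat)) in E; rewrite length_rev in E; simpl in E; discriminate.
Qed.

Lemma lcp_nil_r : forall u, lcp u [] = 0.
Proof. destruct u; reflexivity. Qed.

Lemma vdist_single_r : forall v c, vdist v [c] =
  match v with [] => 1%nat | _ => if Nat.eqb (last v 0) c then (length v - 1)%nat else S (length v) end.
Proof.
  intros v c; destruct v as [|a v]; [reflexivity|].
  unfold vdist. assert (H := hd_rev (a::v) 0).
  remember (last (a::v) 0) as y eqn:Hy. clear Hy.
  assert (L : length (rev (a::v)) = S (length v)) by (rewrite length_rev; reflexivity).
  destruct (rev (a :: v)) as [|y' r] eqn:E; [simpl in L; discriminate|].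
  simpl in H. subst y'. change (rev [c]) with [c].
  replace (lcp (y :: r) [c]) with (if y =? c then 1 else 0)
    by (simpl lcp; rewrite lcp_nil_r; reflexivity).
  destruct (y =? c); simpl length; lia.
Qed.

Lemma vmul_reduced : forall w a, reduced w -> a < 3 -> reduced (vmul w a).
Proof.
  intros w a Hw Ha. destruct w as [|b w]; simpl in *; [tauto|].
  destruct (Nat.eqb_spec a b); [tauto|]. simpl. tauto.
Qed.

Lemma vmul_vmul : forall w a, reduced w -> vmul (vmul w a) a = w.
Proof.
  intros w a Hw. destruct w as [|b w]; simpl; [rewrite Nat.eqb_refl; auto|].
  destruct (Nat.eqb_spec a b).
  - subst. destruct w as [|c w]; simpl; auto.
    destruct Hw as (_ & _ & Hne). destruct (Nat.eqb_spec b c); [congruence|auto].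
  - simpl. rewrite Nat.eqb_refl. auto.
Qed.

Lemma reduced_snoc : forall l a, reduced l -> a < 3 -> (l = [] \/ last l 0 <> a) -> reduced (l ++ [a]).
Proof.
  induction l as [|x l IH]; intros a Hl Ha Hne; simpl; [tauto|].
  destruct Hl as (Hx & Hl & Hxl). split; [auto|split].
  - apply IH; auto. destruct l as [|y l]; [left; auto|right].
    destruct Hne as [Hne|Hne]; [discriminate|]. exact Hne.
  - destruct l as [|y l]; simpl.
    + destruct Hne as [Hne|Hne]; [discriminate|]. simpl in Hne. auto.
    + auto.
Qed.

Lemma last_rev_cons : forall (w : list nat) b, last (rev (b :: w)) 0 = b.
Proof. intros. simpl. apply last_last. Qed.

Lemma reduced_rev : forall w, reduced w -> reduced (rev w).
Proof.
  induction w as [|a w IH]; intros H; simpl; [auto|].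
  destruct H as (Ha & Hw & Hne). apply reduced_snoc; auto.
  destruct w as [|b w]; [left; reflexivity|right].
  rewrite last_rev_cons. auto.
Qed.

Definition lmul (g : nat) (w : list nat) : list nat := rev (vmul (rev w) g).

Lemma lmul_reduced : forall g w, reduced w -> g < 3 -> reduced (lmul g w).
Proof.
  intros. unfold lmul. apply reduced_rev, vmul_reduced; auto. apply reduced_rev; auto.
Qed.

Lemma lmul_lmul : forall g w, reduced w -> lmul g (lmul g w) = w.
Proof.
  intros. unfold lmul. rewrite rev_involutive, vmul_vmul, rev_involutive; auto.
  apply reduced_rev; auto.
Qed.

Lemma lmul_inj : forall g u v, reduced u -> reduced v -> lmul g u = lmul g v -> u = v.
Proof.
  intros g u v Hu Hv H. rewrite <- (lmul_lmul g u), <- (lmul_lmul g v); auto. congruence.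
Qed.

Lemma lmul_cons : forall g x w, w <> [] -> lmul g (x :: w) = x :: lmul g w.
Proof.
  intros g x w Hw. unfold lmul. simpl rev at 1.
  destruct (rev w) as [|h t] eqn:E.
  - exfalso. apply Hw. rewrite <- (rev_involutive w), E. reflexivity.
  - simpl. destruct (g =? h).
    + rewrite rev_app_distr; reflexivity.
    + change (g :: h :: t ++ [x]) with ((g :: h :: t) ++ [x]); rewrite rev_app_distr; reflexivity.
Qed.

Lemma lmul_nil : forall g, lmul g [] = [g].
Proof. reflexivity. Qed.

Lemma lmul_single : forall g z, lmul g [z] = if g =? z then [] else [z; g].
Proof. intros. unfold lmul. simpl. destruct (g =? z); reflexivity. Qed.

Ltac eqbcases := repeat (simpl; match goal with |- context [?a =? ?b] => destruct (Nat.eqb_spec a b) end); subst; simpl; try congruence.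

Lemma vmul_lmul : forall g w a, lmul g (vmul w a) = vmul (lmul g w) a.
Proof.
  intros g w a. destruct w as [|x w].
  - simpl. rewrite lmul_single. rewrite Nat.eqb_sym. destruct (a =? g); reflexivity.
  - destruct w as [|y w].
    + unfold lmul; eqbcases.
    + rewrite (lmul_cons g x (y :: w)) by discriminate. simpl vmul.
      destruct (a =? x); auto.
      rewrite lmul_cons by discriminate. rewrite lmul_cons by discriminate. auto.
Qed.

Lemma vmul_cases : forall U g, reduced U ->
  (exists U', U = g :: U' /\ vmul U g = U' /\ hd_error U' <> Some g) \/
  (vmul U g = g :: U /\ hd_error U <> Some g).
Proof.
  intros U g HU. destruct U as [|a U].
  - right. split; [reflexivity|discriminate].
  - destruct (Nat.eqb_spec g a).
    + subst. left. exists U. split; [auto|split].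
      * simpl. rewrite Nat.eqb_refl. auto.
      * destruct U as [|b U]; simpl; [discriminate|]. destruct HU as (_ & _ & Hne).
        intros H; injection H; auto.
    + right. split.
      * simpl. rewrite (proj2 (Nat.eqb_neq g a) n). auto.
      * simpl. intros H; injection H; auto.
Qed.

Lemma lcp_hd_diff : forall U W g, hd_error U <> Some g -> lcp (g :: W) U = 0.
Proof.
  intros U W g H. destruct U as [|a U]; [reflexivity|]. simpl.
  destruct (Nat.eqb_spec g a); [subst; simpl in H; congruence|reflexivity].
Qed.

Lemma key_vmul : forall U V g, reduced U -> reduced V ->
  length (vmul U g) + length (vmul V g) - 2 * lcp (vmul U g) (vmul V g)
  = length U + length V - 2 * lcp U V.
Proof.
  intros U V g HU HV.
  assert (HUV := lcp_le_l U V). assert (HVU := lcp_le_r U V).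
  destruct (vmul_cases U g HU) as [(U' & -> & -> & HU')|(-> & HU')];
  destruct (vmul_cases V g HV) as [(V' & -> & -> & HV')|(-> & HV')].
  - simpl lcp in *. rewrite Nat.eqb_refl in *. simpl length in *. lia.
  - rewrite (lcp_comm U' (g::V)), (lcp_hd_diff U' V g HU'), (lcp_hd_diff V U' g HV').
    simpl length. lia.
  - rewrite (lcp_comm U (g::V')), (lcp_hd_diff V' U g HV'), (lcp_hd_diff U V' g HU').
    simpl length. lia.
  - simpl lcp at 1. rewrite Nat.eqb_refl. simpl length. lia.
Qed.

Lemma vdist_lmul : forall g u v, reduced u -> reduced v -> vdist (lmul g u) (lmul g v) = vdist u v.
Proof.
  intros g u v Hu Hv. unfold vdist, lmul. rewrite !rev_involutive, !length_rev.
  rewrite key_vmul by (apply reduced_rev; auto).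
  rewrite !length_rev. reflexivity.
Qed.

Definition phi (g : nat) (e : oedge) : oedge := OE (lmul g (otail e)) (olabel e).

Lemma valid_phi : forall g e, g < 3 -> valid_oedge e -> valid_oedge (phi g e).
Proof. intros g [t l] Hg [Ht Hl]; split; simpl; auto. apply lmul_reduced; auto. Qed.

Lemma ohead_phi : forall g e, ohead (phi g e) = lmul g (ohead e).
Proof. intros g [t l]; unfold ohead, phi; simpl. symmetry; apply vmul_lmul. Qed.

Lemma oopp_phi : forall g e, oopp (phi g e) = phi g (oopp e).
Proof. intros g [t l]. unfold oopp. rewrite ohead_phi. reflexivity. Qed.

Lemma reduced_ohead : forall e, valid_oedge e -> reduced (ohead e).
Proof. intros [t l] [Ht Hl]. apply vmul_reduced; auto. Qed.

Lemma valid_oopp : forall e, valid_oedge e -> valid_oedge (oopp e).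
Proof. intros e He. split; [apply reduced_ohead; auto|]. destruct e, He; auto. Qed.

Lemma oopp_oopp : forall e, valid_oedge e -> oopp (oopp e) = e.
Proof.
  intros [t l] [Ht Hl]. unfold oopp, ohead; simpl. rewrite vmul_vmul; auto.
Qed.

Lemma phi_inj : forall g e f, valid_oedge e -> valid_oedge f -> phi g e = phi g f -> e = f.
Proof.
  intros g [t l] [t' l'] [Ht _] [Ht' _] H. unfold phi in H; simpl in H. injection H; intros.
  subst. f_equal. eapply lmul_inj; eauto.
Qed.

Lemma phi_eq_iff : forall g e f, valid_oedge e -> valid_oedge f -> (phi g e = phi g f <-> e = f).
Proof. split; intros; [eapply phi_inj; eauto|subst; auto]. Qed.

Lemma same_edge_phi : forall g e f, valid_oedge e -> valid_oedge f ->
  same_edge (phi g e) (phi g f) = same_edge e f.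
Proof.
  intros g e f He Hf. unfold same_edge. rewrite oopp_phi.
  destruct (oedge_eq_dec (phi g e) (phi g f)) as [E1|E1];
  destruct (oedge_eq_dec e f) as [E2|E2]; try (apply phi_eq_iff in E1; auto; congruence);
  try (subst; congruence).
  destruct (oedge_eq_dec (phi g e) (phi g (oopp f))) as [E3|E3];
  destruct (oedge_eq_dec e (oopp f)) as [E4|E4]; auto.
  - apply phi_eq_iff in E3; auto; [congruence|apply valid_oopp; auto].
  - subst; congruence.
Qed.

Lemma dist2_phi_MM : forall g e f, g < 3 -> valid_oedge e -> valid_oedge f ->
  dist2 (Mid (phi g e)) (Mid (phi g f)) = dist2 (Mid e) (Mid f).
Proof.
  intros g e f Hg He Hf. unfold dist2. rewrite same_edge_phi by auto.
  rewrite !ohead_phi. unfold phi; simpl.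
  assert (R1 := proj1 He). assert (R2 := proj1 Hf).
  assert (R3 := reduced_ohead e He). assert (R4 := reduced_ohead f Hf).
  rewrite !vdist_lmul by auto. reflexivity.
Qed.

Lemma dist2_phi_NM : forall g v e, g < 3 -> reduced v -> valid_oedge e ->
  dist2 (Node (lmul g v)) (Mid (phi g e)) = dist2 (Node v) (Mid e).
Proof.
  intros g v e Hg Hv He. unfold dist2. rewrite !ohead_phi. unfold phi; simpl.
  assert (R1 := proj1 He). assert (R3 := reduced_ohead e He).
  rewrite !vdist_lmul by auto. reflexivity.
Qed.

Lemma dist2_phi_MN : forall g v e, g < 3 -> reduced v -> valid_oedge e ->
  dist2 (Mid (phi g e)) (Node (lmul g v)) = dist2 (Mid e) (Node v).
Proof.
  intros g v e Hg Hv He. unfold dist2. rewrite !ohead_phi. unfold phi; simpl.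
  assert (R1 := proj1 He). assert (R3 := reduced_ohead e He).
  rewrite !vdist_lmul by auto. reflexivity.
Qed.

Lemma on_geodesic_phi : forall g v e f, g < 3 -> reduced v -> valid_oedge e -> valid_oedge f ->
  (on_geodesic (lmul g v) (Mid (phi g e)) (Mid (phi g f)) <-> on_geodesic v (Mid e) (Mid f)).
Proof.
  intros. unfold on_geodesic. rewrite dist2_phi_MM, dist2_phi_MN, dist2_phi_NM by auto. tauto.
Qed.

Lemma toward_phi : forall g e f, g < 3 -> valid_oedge e -> valid_oedge f ->
  (points_toward (phi g e) (phi g f) <-> points_toward e f).
Proof.
  intros. unfold points_toward. rewrite ohead_phi. apply on_geodesic_phi; auto.
  apply reduced_ohead; auto.
Qed.

Lemma away_phi : forall g e f, g < 3 -> valid_oedge e -> valid_oedge f ->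
  (points_away (phi g e) (phi g f) <-> points_away e f).
Proof.
  intros. unfold points_away. apply on_geodesic_phi; auto. destruct H0; auto.
Qed.

Lemma pair_type_phi : forall g j A B, g < 3 -> valid_oedge A -> valid_oedge B ->
  (pair_type j (phi g A) (phi g B) <-> pair_type j A B).
Proof.
  intros g j A B Hg HA HB. unfold pair_type. rewrite dist2_phi_MM by auto.
  assert (HoA := valid_oopp A HA).
  destruct (dist2 (Mid A) (Mid B)); destruct j as [|[|[|[|[|j]]]]]; try tauto;
  rewrite ?oopp_phi, ?phi_eq_iff, ?toward_phi, ?away_phi by auto; tauto.
Qed.

Lemma G1_phi : forall g B A, g < 3 -> valid_oedge A -> valid_oedge B ->
  G1 (phi g B) (phi g A) = G1 B A.
Proof.
  intros g B A Hg HA HB. unfold G1. rewrite oopp_phi, ohead_phi.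
  destruct (oedge_eq_dec (phi g B) (phi g (oopp A))) as [E1|E1];
  destruct (oedge_eq_dec B (oopp A)) as [E2|E2].
  - auto.
  - apply phi_inj in E1; auto; [congruence|apply valid_oopp; auto].
  - subst; congruence.
  - unfold phi at 1; simpl.
    destruct (list_eq_dec Nat.eq_dec (lmul g (ohead A)) (lmul g (otail B))) as [E3|E3];
    destruct (list_eq_dec Nat.eq_dec (ohead A) (otail B)) as [E4|E4]; auto.
    + apply lmul_inj in E3; [congruence|apply reduced_ohead; auto|apply HB].
    + rewrite E4 in E3; congruence.
Qed.

Lemma G_phi : forall k g B A, g < 3 -> valid_oedge A -> valid_oedge B ->
  G k (phi g B) (phi g A) = G k B A.
Proof.
  induction k as [|k IH]; intros g B A Hg HA HB.
  - cbn -[oedge_eq_dec phi]. destruct (oedge_eq_dec (phi g B) (phi g A)) as [E1|E1];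
    destruct (oedge_eq_dec B A) as [E2|E2]; auto.
    + apply phi_inj in E1; auto; congruence.
    + subst; congruence.
  - cbn -[oedge_eq_dec G1 lmul vmul]. 
    assert (Hv : reduced (otail B)) by apply HB.
    assert (Vc : forall c, c < 3 -> valid_oedge (OE (vmul (otail B) c) c))
      by (intros c Hc; split; simpl; auto; apply vmul_reduced; auto).
    assert (Pc : forall c, OE (vmul (lmul g (otail B)) c) c = phi g (OE (vmul (otail B) c) c))
      by (intros c; unfold phi; simpl; rewrite vmul_lmul; auto).
    rewrite !Pc.
    change (OE (lmul g (otail B)) (olabel B)) with (phi g B).
    rewrite !G1_phi, !IH by (auto; apply Vc; lia). reflexivity.
Qed.

Lemma reduced_in_lt : forall l z, reduced l -> In z l -> z < 3.
Proof.
  induction l as [|a l IH]; intros z H Hin; [destruct Hin|].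
  destruct H as (Ha & Hl & _). destruct Hin as [->|Hin]; auto.
Qed.

Lemma lmul_snoc : forall w z, lmul z (w ++ [z]) = w.
Proof.
  intros. unfold lmul. rewrite rev_app_distr. simpl. rewrite Nat.eqb_refl. apply rev_involutive.
Qed.

Lemma wlog_root : forall (P : oedge -> oedge -> Prop),
  (forall g A B, g < 3 -> valid_oedge A -> valid_oedge B -> P (phi g A) (phi g B) -> P A B) ->
  (forall A B, valid_oedge A -> valid_oedge B -> otail B = [] -> P A B) ->
  forall A B, valid_oedge A -> valid_oedge B -> P A B.
Proof.
  intros P Hinv Hroot.
  assert (forall n A B, length (otail B) = n -> valid_oedge A -> valid_oedge B -> P A B).
  { induction n as [|n IH]; intros A B Hn HA HB.
    - apply Hroot; auto. destruct (otail B); [auto|discriminate].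
    - destruct (exists_last (l := otail B)) as (w0 & z & Ew).
      { intros E; rewrite E in Hn; discriminate. }
      assert (Hz : z < 3).
      { apply (reduced_in_lt (otail B)); [apply HB|]. rewrite Ew. apply in_or_app; right; left; auto. }
      apply (Hinv z); auto. apply IH.
      + unfold phi; simpl. rewrite Ew, lmul_snoc. rewrite Ew, length_app in Hn. simpl in Hn. lia.
      + apply valid_phi; auto.
      + apply valid_phi; auto. }
  intros A B; apply (H (length (otail B))); auto.
Qed.

Definition nt (j d : nat) : nat :=
  match d with O => (if Nat.odd j then 1 else 2) | _ => j end.

Definition cl (up : bool) (n : nat) (e : bool) (out : bool) : nat * nat :=
  if e then
    match n with
    | O => ((if out then (if up then 2 else 1) else (if up then 1 else 2)), O)
    | _ => ((if out then (if up then 2 else 3) else (if up then 1 else 4)), n)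
    end
  else ((if out then (if up then 1 else 4) else (if up then 2 else 3)), S n).

Definition Aof (up : bool) (p : list nat) (x : nat) : oedge :=
  if up then OE (x :: p) x else OE p x.
Definition Eof (out : bool) (c : nat) : oedge :=
  if out then OE [] c else OE [c] c.

Definition Facts (A E : oedge) (up out e : bool) (d0 j0 : nat) : Prop :=
  dist2 (Mid A) (Mid E) = 2 * d0 /\
  (d0 = 0 -> (j0 = 1 \/ j0 = 2) /\ (E = A <-> j0 = 1) /\ (E = oopp A <-> j0 = 2)) /\
  (d0 <> 0 -> (points_toward A E <-> up = true) /\ (points_away A E <-> up = false) /\
              (points_toward E A <-> out = e) /\ (points_away E A <-> out <> e) /\
              j0 = (if up then (if Bool.eqb out e then 2 else 1) else (if Bool.eqb out e then 3 else 4))).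

Lemma last_default : forall (l : list nat) d d', l <> [] -> last l d = last l d'.
Proof.
  induction l as [|a l IH]; intros d d' H; [congruence|].
  destruct l as [|b l]; [reflexivity|]. simpl. apply IH. discriminate.
Qed.

From Stdlib Require Import Reals List Arith Lia Lra Bool.
Import ListNotations.
Local Open Scope nat_scope.

Lemma Facts_nil : forall up out x c, x < 3 -> c < 3 ->
  Facts (Aof up [] x) (Eof out c) up out (last [] x =? c)
        (snd (cl up 0 (last [] x =? c) out)) (fst (cl up 0 (last [] x =? c) out)).
Proof.
  intros up out x c Hx Hc.
  destruct x as [|[|[|x]]]; try lia; destruct c as [|[|[|c]]]; try lia;
  destruct up, out; vm_compute;
  repeat split; intros; try solve [lia | discriminate | congruence | reflexivity | tauto].
Qed.

Lemma Facts_cons : forall up out x y p c, reduced (x :: y :: p) -> c < 3 ->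
  Facts (Aof up (y :: p) x) (Eof out c) up out (last (y :: p) x =? c)
        (snd (cl up (length (y :: p)) (last (y :: p) x =? c) out))
        (fst (cl up (length (y :: p)) (last (y :: p) x =? c) out)).
Proof.
  intros up out x y p c Hr Hc.
  assert (Hxy : x <> y) by (destruct Hr as (_ & _ & H); exact H).
  assert (HL : last (y :: p) x = last (y :: p) 0) by (apply last_default; discriminate).
  assert (HL2 : last (x :: y :: p) 0 = last (y :: p) 0) by reflexivity.
  remember (last (y :: p) x) as L eqn:EL.
  assert (V3 : vdist (y :: p) [c] = if L =? c then length p else S (S (length p))).
  { rewrite vdist_single_r. rewrite <- HL. simpl length. destruct (L =? c); lia. }
  assert (V4 : vdist (x :: y :: p) [c] = if L =? c then S (length p) else S (S (S (length p)))).
  { rewrite vdist_single_r. rewrite HL2, <- HL. simpl length. destruct (L =? c); lia. }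
  assert (V3' : vdist [c] (y :: p) = if L =? c then length p else S (S (length p)))
    by (rewrite vdist_comm; auto).
  assert (V4' : vdist [c] (x :: y :: p) = if L =? c then S (length p) else S (S (S (length p))))
    by (rewrite vdist_comm; auto).
  assert (Hh1 : vmul (y :: p) x = x :: y :: p)
    by (simpl; rewrite (proj2 (Nat.eqb_neq x y) Hxy); reflexivity).
  assert (Hh2 : vmul (x :: y :: p) x = y :: p) by (simpl; rewrite Nat.eqb_refl; reflexivity).
  assert (Hh3 : vmul [c] c = []) by (simpl; rewrite Nat.eqb_refl; reflexivity).
  assert (Hh4 : vmul [] c = [c]) by reflexivity.
  assert (Hse : same_edge (Aof up (y :: p) x) (Eof out c) = false).
  { unfold same_edge, oopp, ohead, Aof, Eof. destruct up, out; simpl otail; simpl olabel;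
    rewrite ?Hh1, ?Hh2, ?Hh3, ?Hh4;
    repeat match goal with |- context [oedge_eq_dec ?a ?b] => let H := fresh "E" in destruct (oedge_eq_dec a b) as [H|H];
      [injection H; intros; subst; try discriminate; try congruence|] end; reflexivity. }
  unfold Facts. unfold points_toward, points_away, on_geodesic.
  assert (Hd : dist2 (Mid (Aof up (y :: p) x)) (Mid (Eof out c)) =
     2 * snd (cl up (length (y :: p)) (L =? c) out)).
  { unfold dist2. rewrite Hse. unfold Aof, Eof, ohead; destruct up, out; simpl otail; simpl olabel;
    rewrite ?Hh1, ?Hh2, ?Hh3, ?Hh4, ?vdist_nil_r, ?vdist_nil_l, ?V3, ?V4, ?V3', ?V4';
    simpl length; unfold cl; destruct (L =? c); cbn -[Nat.min]; lia. }
  assert (Hd' : dist2 (Mid (Eof out c)) (Mid (Aof up (y :: p) x)) =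
     2 * snd (cl up (length (y :: p)) (L =? c) out)).
  { rewrite <- Hd. unfold dist2.
    assert (Hse' : same_edge (Eof out c) (Aof up (y :: p) x) = false).
    { unfold same_edge, oopp, ohead, Aof, Eof. destruct up, out; simpl otail; simpl olabel;
      rewrite ?Hh1, ?Hh2, ?Hh3, ?Hh4;
      repeat match goal with |- context [oedge_eq_dec ?a ?b] => let H := fresh "E" in destruct (oedge_eq_dec a b) as [H|H];
        [injection H; intros; subst; try discriminate; try congruence|] end; reflexivity. }
    rewrite Hse, Hse'. rewrite !(vdist_comm (otail (Eof out c))), !(vdist_comm (ohead (Eof out c))). lia. }
  rewrite Hd'. rewrite Hd.
  split; [reflexivity|]. split.
  - intros H0. exfalso. unfold cl in H0. destruct (L =? c); simpl in H0; lia.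
  - intros _. unfold dist2, Aof, Eof, ohead; destruct up, out; simpl otail; simpl olabel;
    rewrite ?Hh1, ?Hh2, ?Hh3, ?Hh4, ?vdist_nil_r, ?vdist_nil_l, ?V3, ?V4, ?V3', ?V4', ?vdist_refl;
    simpl length; unfold cl; destruct (L =? c); cbn -[Nat.min];
    repeat split; intros; try lia; try discriminate; try congruence.
Qed.

Lemma Facts_all : forall up out p x c, reduced (x :: p) -> c < 3 ->
  Facts (Aof up p x) (Eof out c) up out (last p x =? c)
        (snd (cl up (length p) (last p x =? c) out)) (fst (cl up (length p) (last p x =? c) out)).
Proof.
  intros up out p x c Hr Hc. destruct p as [|y p].
  - apply Facts_nil; auto. apply Hr.
  - apply Facts_cons; auto.
Qed.

Lemma Facts_fwd : forall A E up out e d0 j0 j d, Facts A E up out e d0 j0 ->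
  pair_type j A E -> dist2 (Mid A) (Mid E) = 2 * d -> 1 <= j <= 4 -> nt j d = j0 /\ d = d0.
Proof.
  intros A E up out e d0 j0 j d (F1 & F2 & F3) Hp Hd Hj.
  assert (d = d0) by lia. subst d0. split; [|auto].
  unfold pair_type in Hp. rewrite Hd in Hp.
  destruct d as [|d].
  - destruct (F2 eq_refl) as (Hj0 & HA & HO). simpl in Hp.
    destruct j as [|[|[|[|[|j]]]]]; try lia; simpl.
    + symmetry; apply HA; auto.
    + symmetry; apply HO; auto.
    + symmetry; apply HA; auto.
    + symmetry; apply HO; auto.
  - destruct (F3 ltac:(lia)) as (T1 & T2 & T3 & T4 & Hj0).
    replace (2 * S d) with (S (S (2 * d))) in Hp by lia.
    simpl nt. destruct j as [|[|[|[|[|j]]]]]; try lia; destruct Hp as [P1 P2].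
    + apply T1 in P1. apply T4 in P2. rewrite Hj0, P1; destruct out, e; simpl in *; congruence.
    + apply T1 in P1. apply T3 in P2. rewrite Hj0, P1; destruct out, e; simpl in *; congruence.
    + apply T2 in P1. apply T3 in P2. rewrite Hj0, P1; destruct out, e; simpl in *; congruence.
    + apply T2 in P1. apply T4 in P2. rewrite Hj0, P1; destruct out, e; simpl in *; congruence.
Qed.

Lemma Facts_bwd : forall A E up out e d0 j0, Facts A E up out e d0 j0 ->
  pair_type j0 A E /\ nt j0 d0 = j0 /\ 1 <= j0 <= 4.
Proof.
  intros A E up out e d0 j0 (F1 & F2 & F3).
  unfold pair_type. rewrite F1. destruct d0 as [|d].
  - destruct (F2 eq_refl) as (Hj0 & HA & HO).
    destruct Hj0 as [->| ->]; simpl; split; try tauto; try (apply HA; auto); try (apply HO; auto); lia.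
  - destruct (F3 ltac:(lia)) as (T1 & T2 & T3 & T4 & Hj0).
    replace (2 * S d) with (S (S (2 * d))) by lia. simpl nt.
    destruct up, out, e; simpl in Hj0; subst j0; (split; [|split; [reflexivity|lia]]);
      split; first [apply T1 | apply T2 | apply T3 | apply T4]; try reflexivity; try discriminate.
Qed.

Local Open Scope R_scope.

Fixpoint fG (k : nat) (j d : nat) {struct k} : R :=
  match k with
  | O => match j, d with 1%nat, 0%nat => 1 | _, _ => 0 end
  | S k' =>
    match d with
    | O => match j with
           | 1%nat => -(1/3) * fG k' 2 0 + 4/3 * fG k' 3 1
           | _ => -(1/3) * fG k' 1 0 + 4/3 * fG k' 2 1
           end
    | S d' => match j with
              | 1%nat => 1/3 * fG k' 2 d + 2/3 * fG k' 1 d'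
              | 2%nat => -(1/3) * fG k' 1 d + 4/3 * fG k' 2 (S d)
              | 3%nat => -(1/3) * fG k' 4 d + 4/3 * fG k' 3 (S d)
              | _ => 1/3 * fG k' 3 d + 2/3 * fG k' (nt 4 d') d'
              end
    end
  end.

Local Open Scope nat_scope.

Lemma decompose_A : forall A, valid_oedge A ->
  exists up p x, reduced (x :: p) /\ A = Aof up p x.
Proof.
  intros [t a] [Ht Ha]; simpl in *.
  destruct t as [|b t].
  - exists false, [], a. split; [simpl; tauto|reflexivity].
  - destruct (Nat.eqb_spec a b).
    + subst. exists true, t, b. split; [exact Ht|reflexivity].
    + exists false, (b :: t), a. split; [simpl in *; tauto|reflexivity].
Qed.

Lemma oopp_neq : forall A, valid_oedge A -> oopp A <> A.
Proof.
  intros [t a] [Ht Ha] H. unfold oopp, ohead in H; simpl in H. injection H; intros E.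
  destruct t as [|b t]; simpl in E; [discriminate|].
  destruct (a =? b).
  - apply (f_equal (@length nat)) in E; simpl in E; lia.
  - apply (f_equal (@length nat)) in E; simpl in E; lia.
Qed.

Lemma dist2_self : forall A, dist2 (Mid A) (Mid A) = 0.
Proof. intros A. simpl. unfold same_edge. destruct (oedge_eq_dec A A); [reflexivity|congruence]. Qed.

Lemma last_In' : forall (l : list nat) d, l <> [] -> In (last l d) l.
Proof.
  induction l as [|a l IH]; intros d H; [congruence|].
  destruct l as [|b l]; [left; reflexivity|]. right. apply IH. discriminate.
Qed.

Lemma last_lt3 : forall p x, reduced (x :: p) -> last p x < 3.
Proof.
  intros p x H. destruct p as [|y p]; [apply H|].
  rewrite (last_default (y :: p) x 0) by discriminate.
  apply (reduced_in_lt (y :: p)); [apply H|]. apply last_In'. discriminate.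
Qed.

Lemma G_S_root : forall k b A, G (S k) (OE [] b) A =
  (G1 (OE [] b) (OE [0%nat] 0%nat) * G k (OE [0%nat] 0%nat) A
 + G1 (OE [] b) (OE [1%nat] 1%nat) * G k (OE [1%nat] 1%nat) A
 + G1 (OE [] b) (OE [2%nat] 2%nat) * G k (OE [2%nat] 2%nat) A)%R.
Proof. reflexivity. Qed.

Theorem comb : forall k A B j d, valid_oedge A -> valid_oedge B -> 1 <= j <= 4 ->
  pair_type j A B -> dist2 (Mid A) (Mid B) = 2 * d -> G k B A = fG k (nt j d) d.
Proof.
  induction k as [|k IH].
  - intros A B j d HA HB Hj Hp Hd. cbn -[oedge_eq_dec].
    unfold pair_type in Hp. rewrite Hd in Hp.
    destruct d as [|d].
    + simpl in Hp. destruct j as [|[|[|[|[|j]]]]]; try lia; simpl.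
      * subst; destruct (oedge_eq_dec A A); congruence.
      * subst. destruct (oedge_eq_dec (oopp A) A) as [E|E]; [exfalso; apply (oopp_neq A); auto|reflexivity].
      * subst; destruct (oedge_eq_dec A A); congruence.
      * subst. destruct (oedge_eq_dec (oopp A) A) as [E|E]; [exfalso; apply (oopp_neq A); auto|reflexivity].
    + destruct (oedge_eq_dec B A) as [E|E].
      * subst. rewrite dist2_self in Hd. lia.
      * simpl nt. destruct j as [|[|j]]; reflexivity.
  - intros A B j d HA HB. revert j d. revert A B HA HB.
    apply (wlog_root (fun A B => forall j d, 1 <= j <= 4 -> pair_type j A B ->
              dist2 (Mid A) (Mid B) = 2 * d -> G (S k) B A = fG (S k) (nt j d) d)).
    + intros g A B Hg HA HB H j d Hj Hp Hd. rewrite <- (G_phi (S k) g B A) by auto.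
      apply H; auto.
      * apply pair_type_phi; auto.
      * rewrite dist2_phi_MM; auto.
    + intros A B HA HB Hroot j d Hj Hp Hd.
      destruct B as [t b]; simpl in Hroot; subst t.
      assert (Hb : b < 3) by apply HB.
      destruct (decompose_A A HA) as (up & p & x & Hr & ->).
      destruct (Facts_fwd _ _ _ _ _ _ _ j d (Facts_all up true p x b Hr Hb) Hp Hd Hj) as [E1 E2].
      rewrite E1, E2. clear E1 E2 Hp Hd.
      assert (IHc : forall c, c < 3 -> G k (OE [c] c) (Aof up p x) =
          fG k (fst (cl up (length p) (last p x =? c) false)) (snd (cl up (length p) (last p x =? c) false))).
      { intros c Hc. destruct (Facts_bwd _ _ _ _ _ _ _ (Facts_all up false p x c Hr Hc)) as (P1 & P2 & P3).
        pose proof (Facts_all up false p x c Hr Hc) as (F1 & _).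
        change (OE [c] c) with (Eof false c).
        assert (HEc : valid_oedge (Eof false c)) by (split; simpl; [tauto|auto]).
        rewrite (IH (Aof up p x) (Eof false c) _ _ HA HEc P3 P1 F1).
        rewrite P2. reflexivity. }
      rewrite G_S_root. rewrite !IHc by lia.
      assert (HL := last_lt3 p x Hr).
      destruct (last p x) as [|[|[|L]]]; try lia;
      destruct b as [|[|[|b]]]; try lia; destruct up; destruct (length p) as [|n];
      unfold G1; cbn -[Rmult Rplus Rdiv Ropp Rinv fG IZR]; cbn [fG nt Nat.odd Nat.even negb]; lra.
Qed.

From Stdlib Require Import Reals Lra Lia.
From Coquelicot Require Import Coquelicot.
Open Scope R_scope.

Lemma s_pos : 0 < sqrt 2.
Proof. apply sqrt_lt_R0; lra. Qed.

Lemma s_sq : sqrt 2 * sqrt 2 = 2.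
Proof. apply sqrt_sqrt; lra. Qed.

Lemma s_pow2 : sqrt 2 ^ 2 = 2.
Proof. simpl. rewrite Rmult_1_r. apply s_sq. Qed.

Lemma s_bounds : 1.4 < sqrt 2 < 1.5.
Proof.
  split.
  - apply Rsqr_incrst_0; [unfold Rsqr; rewrite s_sq; lra|lra|left; apply s_pos].
  - apply Rsqr_incrst_0; [unfold Rsqr; rewrite s_sq; lra|left; apply s_pos|lra].
Qed.

Lemma rr_pos : 0 < rr.
Proof. unfold rr. assert (H := s_pos). lra. Qed.

Lemma mu_eq : forall x, mu x = 4 * x / (2 + 9 * x ^ 2).
Proof.
  intros x. unfold mu, rr.
  assert (H : (sqrt 2 / 3) ^ 2 = 2/9).
  { unfold Rdiv. rewrite Rpow_mult_distr, s_pow2. field. }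
  rewrite H. field. nra.
Qed.

Lemma mu_bound : forall x, Rabs (mu x) <= 2 * Rabs x.
Proof.
  intros x. rewrite mu_eq. unfold Rdiv. rewrite Rabs_mult, Rabs_mult.
  assert (P : 0 < 2 + 9 * x^2) by nra.
  rewrite (Rabs_pos_eq (/ _)) by (left; apply Rinv_0_lt_compat; auto).
  rewrite (Rabs_pos_eq 4) by lra.
  apply (Rmult_le_reg_r (2 + 9 * x ^ 2)); auto.
  rewrite Rmult_assoc, Rinv_l by lra. assert (0 <= Rabs x) by apply Rabs_pos. nra.
Qed.

Lemma mu_0 : mu 0 = 0.
Proof. rewrite mu_eq. unfold Rdiv. ring. Qed.

Lemma mu_neq0 : forall x, x <> 0 -> mu x <> 0.
Proof.
  intros x Hx. rewrite mu_eq. assert (P : 0 < 2 + 9 * x^2) by nra.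
  unfold Rdiv. intros H. apply Rmult_integral in H. destruct H as [H|H]; [lra|].
  apply Rinv_neq_0_compat in H; auto. lra.
Qed.

Lemma zz_0 : zz 0 = 0.
Proof. unfold zz. rewrite mu_0. unfold z_minus. destruct (Req_EM_T 0 0); [reflexivity|lra]. Qed.

Lemma zz_facts : forall x, Rabs x <= 1/20 ->
  mu x * zz x ^ 2 - zz x + mu x = 0 /\ Rabs (zz x) <= 4 * Rabs x.
Proof.
  intros x Hx. destruct (Req_dec x 0) as [->|Hx0].
  - rewrite zz_0, mu_0, Rabs_R0. split; [ring|lra].
  - set (m := mu x). assert (Hm := mu_bound x). fold m in Hm.
    assert (Hm0 : m <> 0) by (apply mu_neq0; auto).
    assert (Hq : 0 <= 1 - 4 * m ^ 2).
    { assert (Rabs m <= 1/10) by lra. assert (m^2 <= 1/100).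
      { rewrite <- (pow2_abs m). assert (0 <= Rabs m) by apply Rabs_pos. nra. }
      lra. }
    set (q := sqrt (1 - 4 * m ^ 2)).
    assert (Hq2 : q * q = 1 - 4 * m ^ 2) by (apply sqrt_sqrt; auto).
    assert (Hq0 : 0 <= q) by apply sqrt_pos.
    assert (Ez : zz x = (1 - q) / (2 * m)).
    { unfold zz, z_minus. fold m. destruct (Req_EM_T m 0); [contradiction|reflexivity]. }
    assert (Ez' : zz x = 2 * m / (1 + q)).
    { rewrite Ez. field_simplify_eq; [nra|split; [lra|auto]]. }
    split.
    + rewrite Ez. field_simplify_eq; [nra|auto].
    + rewrite Ez'. assert (P1 : 1 <= 1 + q) by lra.
      assert (Rabs (2 * m / (1 + q)) <= Rabs (2 * m)).
      { unfold Rdiv. rewrite Rabs_mult. rewrite (Rabs_pos_eq (/ (1 + q))) by (left; apply Rinv_0_lt_compat; lra).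
        assert (/ (1 + q) <= 1) by (rewrite <- Rinv_1; apply Rinv_le_contravar; lra).
        assert (0 < / (1 + q)) by (apply Rinv_0_lt_compat; lra).
        assert (0 <= Rabs (2 * m)) by apply Rabs_pos. nra. }
      rewrite Rabs_mult, (Rabs_pos_eq 2) in H by lra. lra.
Qed.

Definition Fp t W := 1 - 4*t*W.
Definition E1p t W := 1 - 5*t*W + 2*t^2*W^2.
Definition E2p t W := 1 - 5*t*W + 2*W^2.
Definition Dp t W := (1 - 5*t*W)^2 - 4*t^2*W^4.
Definition G1p t W := W/(2*t) * (Fp t W * E1p t W) / Dp t W.
Definition G2p t W := -(W/2) * E1p t W / Dp t W.
Definition G3p t W := t*W/2 * E2p t W / Dp t W.
Definition G4p t W := -(W/2) * (Fp t W * E2p t W) / Dp t W.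
Definition RelP t W := (1 + 9*t^2)*W - 2*t*(1 + 2*W^2).

Lemma s_pow4 : sqrt 2 ^ 4 = 4.
Proof. replace 4%nat with (2*2)%nat by reflexivity. rewrite pow_mult, s_pow2. ring. Qed.
Lemma s_pow6 : sqrt 2 ^ 6 = 8.
Proof. replace 6%nat with (2*3)%nat by reflexivity. rewrite pow_mult, s_pow2. ring. Qed.

Ltac spow := rewrite ?Rpow_mult_distr, ?s_pow4, ?s_pow2; ring_simplify; rewrite ?s_pow6, ?s_pow4, ?s_pow2; field.

Lemma conv : forall t W,
  1 - 2 * (sqrt 2 * t) * (sqrt 2 * W) = Fp t W /\
  1 - 5/2 * (sqrt 2 * t) * (sqrt 2 * W) + (sqrt 2 * t)^2/2 * (sqrt 2 * W)^2 = E1p t W /\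
  (1 - 5/2 * (sqrt 2 * t) * (sqrt 2 * W))^2 - (sqrt 2 * t)^2/2 * (sqrt 2 * W)^4 = Dp t W /\
  1 - 5/2 * (sqrt 2 * t) * (sqrt 2 * W) + (sqrt 2 * W)^2 = E2p t W.
Proof.
  intros t W. unfold Fp, E1p, Dp, E2p. split; [spow|]. split; [spow|]. split; [spow|]. spow.
Qed.

Lemma s_neq0 : sqrt 2 <> 0.
Proof. assert (H := s_pos). lra. Qed.

Lemma g1_tW : forall x, x <> 0 -> g1 x = G1p (x / sqrt 2) (zz x / sqrt 2).
Proof.
  intros x Hx. unfold g1. destruct (Req_EM_T x 0) as [E|_]; [contradiction|].
  unfold g1_raw, DD. generalize (zz x) as z. intros z.
  assert (Ex : x = sqrt 2 * (x / sqrt 2)) by (field; apply s_neq0).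
  assert (Ez : z = sqrt 2 * (z / sqrt 2)) by (field; apply s_neq0).
  set (t := x / sqrt 2) in *. set (W := z / sqrt 2) in *.
  assert (Ht : t <> 0) by (unfold t; unfold Rdiv; apply Rmult_integral_contrapositive; split; [auto|apply Rinv_neq_0_compat, s_neq0]).
  rewrite Ex, Ez.
  destruct (conv t W) as (C1 & C2 & C3 & C4). rewrite C1, C2, C3.
  unfold G1p. f_equal. f_equal. field. split; [auto|apply s_neq0].
Qed.

Ltac tW_setup x :=
  generalize (zz x) as z; intros z;
  let Ex := fresh "Ex" in let Ez := fresh "Ez" in
  assert (Ex : x = sqrt 2 * (x / sqrt 2)) by (field; apply s_neq0);
  assert (Ez : z = sqrt 2 * (z / sqrt 2)) by (field; apply s_neq0);
  set (t := x / sqrt 2) in *; set (W := z / sqrt 2) in *;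
  rewrite Ex, Ez; destruct (conv t W) as (C1 & C2 & C3 & C4).

Lemma g2_tW : forall x, g2 x = G2p (x / sqrt 2) (zz x / sqrt 2).
Proof.
  intros x. unfold g2, DD. tW_setup x. rewrite C2, C3. unfold G2p. f_equal. f_equal. f_equal.
  field. apply s_neq0.
Qed.

Lemma g4_tW : forall x, g4 x = G4p (x / sqrt 2) (zz x / sqrt 2).
Proof.
  intros x. unfold g4, DD. tW_setup x. rewrite C1, C3, C4. unfold G4p. f_equal. f_equal. f_equal.
  field. apply s_neq0.
Qed.

Lemma g3_tW : forall x, g3 x = G3p (x / sqrt 2) (zz x / sqrt 2).
Proof.
  intros x. unfold g3, DD. tW_setup x. rewrite C3, C4. unfold G3p. f_equal. f_equal.
  replace (sqrt 2 * t * (sqrt 2 * W)) with (sqrt 2 ^ 2 * (t * W)) by ring. rewrite s_pow2. field.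
Qed.

Lemma RelP_tW : forall x, Rabs x <= 1/20 -> RelP (x / sqrt 2) (zz x / sqrt 2) = 0.
Proof.
  intros x Hx. destruct (zz_facts x Hx) as [H _]. rewrite mu_eq in H.
  revert H. tW_setup x. intros H.
  assert (E : RelP t W * (-2 * sqrt 2) =
     4 * (sqrt 2 * t) * (sqrt 2 * W)^2 - (2 + 9 * (sqrt 2 * t)^2) * (sqrt 2 * W) + 4 * (sqrt 2 * t)).
  { unfold RelP. spow. }
  assert (E2 : 4 * (sqrt 2 * t) * (sqrt 2 * W)^2 - (2 + 9 * (sqrt 2 * t)^2) * (sqrt 2 * W) + 4 * (sqrt 2 * t)
     = (2 + 9 * (sqrt 2 * t)^2) * (4 * (sqrt 2 * t) / (2 + 9 * (sqrt 2 * t) ^ 2) * (sqrt 2 * W) ^ 2 - sqrt 2 * W +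
      4 * (sqrt 2 * t) / (2 + 9 * (sqrt 2 * t) ^ 2))).
  { field. nra. }
  rewrite H, Rmult_0_r in E2. rewrite E2 in E.
  assert (Hs := s_neq0). apply Rmult_integral in E. destruct E; [auto|lra].
Qed.

Lemma W_bound : forall x, Rabs x <= 1/20 -> Rabs (zz x / sqrt 2) <= 4 * Rabs (x / sqrt 2).
Proof.
  intros x Hx. destruct (zz_facts x Hx) as [_ H]. unfold Rdiv. rewrite !Rabs_mult.
  assert (0 <= Rabs (/ sqrt 2)) by apply Rabs_pos. nra.
Qed.

Lemma tW_bounds : forall t W, Rabs t <= 1/30 -> Rabs W <= 4 * Rabs t ->
  -1/200 <= t * W <= 1/200 /\ W^2 <= 16/900 /\ -2/15 <= W <= 2/15 /\
  9/10 <= Dp t W /\ 9/10 <= E1p t W <= 11/10 /\ 9/10 <= E2p t W <= 11/10 /\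
  9/10 <= Fp t W <= 11/10.
Proof.
  intros t W Ht HW.
  assert (Hu : Rabs (t * W) <= 1/200).
  { rewrite Rabs_mult. assert (0 <= Rabs t) by apply Rabs_pos. assert (0 <= Rabs W) by apply Rabs_pos. nra. }
  assert (HWb : Rabs W <= 2/15) by lra.
  apply Rabs_le_between in Hu. apply Rabs_le_between in HWb.
  assert (Hv : W^2 <= 16/900) by nra.
  set (u := t * W) in *.
  assert (ED : Dp t W = (1 - 5*u)^2 - 4*u^2*W^2) by (unfold Dp, u; ring).
  assert (E1 : E1p t W = 1 - 5*u + 2*u^2) by (unfold E1p, u; ring).
  assert (E2 : E2p t W = 1 - 5*u + 2*W^2) by (unfold E2p, u; ring).
  assert (EF : Fp t W = 1 - 4*u) by (unfold Fp, u; ring).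
  rewrite ED, E1, E2, EF.
  assert (0 <= W^2) by nra. assert (u^2 <= 1/40000) by nra.
  repeat split; try lra; nra.
Qed.

Lemma div_bound : forall a b lo hi blo, 0 < blo -> blo <= b -> lo <= a <= hi -> 0 <= lo ->
  0 <= a / b <= hi / blo.
Proof.
  intros a b lo hi blo H1 H2 H3 H4. split.
  - apply Rdiv_le_0_compat; lra.
  - apply Rle_trans with (hi / b).
    + unfold Rdiv; apply Rmult_le_compat_r; [left; apply Rinv_0_lt_compat; lra|lra].
    + unfold Rdiv; apply Rmult_le_compat_l; [lra|apply Rinv_le_contravar; lra].
Qed.

Lemma G_bounds : forall t W, Rabs t <= 1/30 -> Rabs W <= 4 * Rabs t ->
  Rabs (G2p t W) <= 1 /\ Rabs (G3p t W) <= 3 * t^2 /\ Rabs (G4p t W) <= 1 /\ Rabs (G3p t W) <= 1.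
Proof.
  intros t W Ht HW.
  destruct (tW_bounds t W Ht HW) as (Hu & Hv & Hw & HD & HE1 & HE2 & HF).
  assert (Htw : Rabs (t * W) <= 4 * t^2).
  { rewrite Rabs_mult. rewrite <- (pow2_abs t). assert (0 <= Rabs t) by apply Rabs_pos. nra. }
  assert (Ht2 : t^2 <= 1/900).
  { rewrite <- (pow2_abs t). assert (0 <= Rabs t) by apply Rabs_pos. nra. }
  destruct (div_bound (E1p t W) (Dp t W) (9/10) (11/10) (9/10)) as [R1a R1b]; try lra.
  destruct (div_bound (E2p t W) (Dp t W) (9/10) (11/10) (9/10)) as [R2a R2b]; try lra.
  destruct (div_bound (Fp t W * E2p t W) (Dp t W) (81/100) (121/100) (9/10)) as [R3a R3b]; try lra.
  { split; nra. }
  unfold G2p, G3p, G4p.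
  replace (-(W/2) * E1p t W / Dp t W) with (-(W/2) * (E1p t W / Dp t W)) by (unfold Rdiv; ring).
  replace (t * W / 2 * E2p t W / Dp t W) with ((t * W) / 2 * (E2p t W / Dp t W)) by (unfold Rdiv; ring).
  replace (-(W/2) * (Fp t W * E2p t W) / Dp t W) with (-(W/2) * ((Fp t W * E2p t W) / Dp t W)) by (unfold Rdiv; ring).
  rewrite !Rabs_mult.
  rewrite (Rabs_pos_eq (E1p t W / Dp t W)), (Rabs_pos_eq (E2p t W / Dp t W)), (Rabs_pos_eq (Fp t W * E2p t W / Dp t W)) by lra.
  rewrite !Rabs_Ropp, !Rabs_div, !(Rabs_pos_eq 2) by lra.
  assert (0 <= Rabs W) by apply Rabs_pos. assert (Rabs W <= 2/15) by (apply Rabs_le; lra).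
  assert (0 <= Rabs (t * W)) by apply Rabs_pos.
  repeat split; nra.
Qed.

Lemma G1_bound : forall t W, t <> 0 -> Rabs t <= 1/30 -> Rabs W <= 4 * Rabs t -> RelP t W = 0 ->
  Rabs (G1p t W) <= 3.
Proof.
  intros t W Ht0 Ht HW HR.
  destruct (tW_bounds t W Ht HW) as (Hu & Hv & Hw & HD & HE1 & HE2 & HF).
  assert (EW : W / (2 * t) = (1 + 2 * W^2) / (1 + 9 * t^2)).
  { unfold RelP in HR. field_simplify_eq; [lra|split; [nra|auto]]. }
  destruct (div_bound (1 + 2 * W^2) (1 + 9 * t^2) 1 (1 + 32/900) 1) as [Q1 Q2]; try nra.
  destruct (div_bound (Fp t W * E1p t W) (Dp t W) (81/100) (121/100) (9/10)) as [R3a R3b]; try lra.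
  { split; nra. }
  unfold G1p. rewrite EW.
  replace ((1 + 2 * W ^ 2) / (1 + 9 * t ^ 2) * (Fp t W * E1p t W) / Dp t W)
    with ((1 + 2 * W ^ 2) / (1 + 9 * t ^ 2) * ((Fp t W * E1p t W) / Dp t W)) by (unfold Rdiv; ring).
  rewrite Rabs_mult, !Rabs_pos_eq by lra. nra.
Qed.

Lemma alg_ids : forall t W, t <> 0 -> Dp t W <> 0 -> RelP t W = 0 ->
  G1p t W * W = 3*t*(1/3 * (G2p t W * W) + 2/3 * G1p t W) /\
  G4p t W * W = 3*t*(1/3 * (G3p t W * W) + 2/3 * G4p t W) /\
  G2p t W = 3*t*(-(1/3) * G1p t W + 4/3 * (G2p t W * W)) /\
  G3p t W = 3*t*(-(1/3) * G4p t W + 4/3 * (G3p t W * W)) /\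
  G1p t W = 1 + 3*t*(-(1/3) * G2p t W + 4/3 * (G3p t W * W)) /\
  G4p t W = G2p t W /\ G3p t W = G1p t W - 1.
Proof.
  intros t W Ht HD HR.
  assert (K : forall a b Q, a - b = Q * RelP t W / (2*t*Dp t W) -> a = b).
  { intros a b Q H. rewrite HR in H. unfold Rdiv in H. rewrite Rmult_0_r, Rmult_0_l in H. lra. }
  unfold G1p, G2p, G3p, G4p, RelP, Fp, E1p, E2p, Dp in *.
  split; [apply (K _ _ (W - 5*t*W^2 + 2*t^2*W^3)); field; auto|].
  split; [apply (K _ _ (-t*W - 2*t*W^3 + 5*t^2*W^2)); field; auto|].
  split; [apply (K _ _ 0); field; auto|].
  split; [apply (K _ _ 0); field; auto|].
  split; [apply (K _ _ (1 - 5*t*W + 2*t^2*W^2)); field; auto|].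
  split; [apply (K _ _ (-2*t*W^2)); field; auto|].
  apply (K _ _ (-1 + 5*t*W)); field; auto.
Qed.

Lemma x_small : forall x, Rabs x <= 1/20 -> Rabs (x / sqrt 2) <= 1/30 ->
  Rabs (x / sqrt 2) <= 1/30 /\ Rabs (zz x / sqrt 2) <= 4 * Rabs (x / sqrt 2) /\
  RelP (x / sqrt 2) (zz x / sqrt 2) = 0 /\ Dp (x / sqrt 2) (zz x / sqrt 2) <> 0.
Proof.
  intros x H1 H2. assert (HW := W_bound x H1). split; [auto|split; [auto|split]].
  - apply RelP_tW; auto.
  - destruct (tW_bounds _ _ H2 HW) as (_ & _ & _ & HD & _). lra.
Qed.

Lemma g1_0 : g1 0 = 1.
Proof.
  unfold g1. destruct (Req_EM_T 0 0) as [_|E]; [|lra].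
  replace (Lim g1_raw 0) with (Finite 1); [reflexivity|].
  symmetry. apply is_lim_unique. apply is_lim_spec. simpl. intros eps.
  assert (Hs := s_bounds).
  assert (He : 0 < Rmin (1/25) eps) by (apply Rmin_pos; [lra|apply cond_pos]).
  exists (mkposreal _ He). intros x Hx Hx0.
  unfold ball in Hx; simpl in Hx; unfold AbsRing_ball, abs, minus, plus, opp in Hx; simpl in Hx.
  rewrite Ropp_0, Rplus_0_r in Hx.
  assert (Hx1 : Rabs x < 1/25) by (apply Rlt_le_trans with (1 := Hx); apply Rmin_l).
  assert (Hx2 : Rabs x < eps) by (apply Rlt_le_trans with (1 := Hx); apply Rmin_r).
  assert (Ht : Rabs (x / sqrt 2) <= 1/30).
  { unfold Rdiv. rewrite Rabs_mult, (Rabs_pos_eq (/ sqrt 2)) by (left; apply Rinv_0_lt_compat; lra).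
    assert (/ sqrt 2 <= / 1.4) by (apply Rinv_le_contravar; lra). assert (/ 1.4 = 1/1.4) by lra. assert (0 <= Rabs x) by apply Rabs_pos. nra. }
  destruct (x_small x ltac:(lra) Ht) as (_ & HW & HR & HD).
  assert (Ht0 : x / sqrt 2 <> 0).
  { unfold Rdiv. apply Rmult_integral_contrapositive; split; [auto|apply Rinv_neq_0_compat, s_neq0]. }
  assert (E : g1_raw x = g1 x) by (unfold g1; destruct (Req_EM_T x 0); [contradiction|reflexivity]).
  rewrite E, g1_tW by auto.
  destruct (alg_ids _ _ Ht0 HD HR) as (_ & _ & _ & _ & _ & _ & H3).
  replace (G1p (x / sqrt 2) (zz x / sqrt 2) - 1) with (G3p (x / sqrt 2) (zz x / sqrt 2)) by lra.
  destruct (G_bounds _ _ Ht HW) as (_ & B3 & _).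
  assert (Ht2 : (x / sqrt 2)^2 = x^2 / 2) by (unfold Rdiv; rewrite Rpow_mult_distr, pow_inv, s_pow2; reflexivity).
  rewrite Ht2 in B3. rewrite <- (pow2_abs x) in B3. assert (0 <= Rabs x) by apply Rabs_pos.
  nra.
Qed.

From Stdlib Require Import Reals Lra Lia.
From Coquelicot Require Import Coquelicot.
Open Scope R_scope.

Definition T (H : nat -> nat -> R) (j d : nat) : R :=
  match d with
  | O => match j with
         | 1%nat => -(1/3) * H 2%nat 0%nat + 4/3 * H 3%nat 1%nat
         | _ => -(1/3) * H 1%nat 0%nat + 4/3 * H 2%nat 1%nat
         end
  | S d' => match j with
            | 1%nat => 1/3 * H 2%nat d + 2/3 * H 1%nat d'
            | 2%nat => -(1/3) * H 1%nat d + 4/3 * H 2%nat (S d)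
            | 3%nat => -(1/3) * H 4%nat d + 4/3 * H 3%nat (S d)
            | _ => 1/3 * H 3%nat d + 2/3 * H (nt 4 d') d'
            end
  end.

Lemma f_S : forall k j d, fG (S k) j d = T (fG k) j d.
Proof. intros k j d. destruct d as [|d]; destruct j as [|[|[|[|[|j]]]]]; reflexivity. Qed.

Definition base (j d : nat) : Prop := (1 <= j <= 4)%nat /\ (d <> 0 \/ j <= 2)%nat.
Definition c0 (j d : nat) : R := match j, d with 1%nat, 0%nat => 1 | _, _ => 0 end.

Definition Hsel (G1 G2 G3 G4 W : R) (j d : nat) : R :=
  (match j with 1%nat => G1 | 2%nat => G2 | 3%nat => G3 | _ => G4 end) * W ^ d.

Lemma Hsel_eq : forall t W G1 G2 G3 G4,
  G1 * W = 3*t*(1/3 * (G2 * W) + 2/3 * G1) ->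
  G4 * W = 3*t*(1/3 * (G3 * W) + 2/3 * G4) ->
  G2 = 3*t*(-(1/3) * G1 + 4/3 * (G2 * W)) ->
  G3 = 3*t*(-(1/3) * G4 + 4/3 * (G3 * W)) ->
  G1 = 1 + 3*t*(-(1/3) * G2 + 4/3 * (G3 * W)) ->
  G4 = G2 ->
  forall j d, base j d -> Hsel G1 G2 G3 G4 W j d = c0 j d + 3 * t * T (Hsel G1 G2 G3 G4 W) j d.
Proof.
  intros t W G1 G2 G3 G4 I1 I4 I2 I3 I10 H4 j d [Hj Hd].
  unfold Hsel, T, c0.
  destruct d as [|d].
  - destruct Hd as [Hd|Hd]; [lia|].
    destruct j as [|[|[|j]]]; try lia; simpl pow.
    + rewrite I10 at 1. ring.
    + rewrite I2 at 1. ring.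
  - destruct j as [|[|[|[|[|j]]]]]; try lia; simpl pow.
    + replace (G1 * (W * W ^ d)) with ((G1 * W) * W ^ d) by ring. rewrite I1. ring.
    + replace (G2 * (W * W ^ d)) with (G2 * W ^ d * W) by ring. rewrite I2 at 1. ring.
    + replace (G3 * (W * W ^ d)) with (G3 * W ^ d * W) by ring. rewrite I3 at 1. ring.
    + replace (G4 * (W * W ^ d)) with ((G4 * W) * W ^ d) by ring. rewrite I4.
      destruct d as [|d]; simpl; [rewrite H4|]; ring.
Qed.

Definition Wf (y : R) : R := zz (rr * y) / sqrt 2.
Definition V (j d : nat) (y : R) : R := gj j (rr * y) * Wf y ^ d.

Lemma T_ext : forall H H' j d, (forall j' d', H j' d' = H' j' d') -> T H j d = T H' j d.
Proof. intros H H' j d E. unfold T. destruct d, j as [|[|[|[|j]]]]; rewrite !E; reflexivity. Qed.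

Lemma rr_val : 0.46 < rr < 0.5.
Proof. unfold rr. assert (H := s_bounds). lra. Qed.

Lemma t_of_y : forall y, rr * y / sqrt 2 = y / 3.
Proof. intros y. unfold rr. field. apply s_neq0. Qed.

Lemma V_eq : forall j d y, base j d -> Rabs y <= 1/10 ->
  V j d y = c0 j d + y * T (fun j' d' => V j' d' y) j d.
Proof.
  intros j d y Hb Hy.
  destruct (Req_dec y 0) as [->|Hy0].
  - unfold V, Wf. rewrite Rmult_0_r, zz_0. unfold Rdiv at 1. rewrite Rmult_0_l, Rmult_0_l, Rplus_0_r.
    destruct Hb as [Hj Hd]. destruct d as [|d].
    + destruct Hd as [Hd|Hd]; [lia|]. destruct j as [|[|[|j]]]; try lia; simpl.
      * rewrite g1_0. ring.
      * unfold g2. rewrite zz_0. unfold Rdiv. ring.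
    + simpl. unfold c0. destruct j as [|[|j]]; ring.
  - assert (Hx : Rabs (rr * y) <= 1/20).
    { rewrite Rabs_mult, Rabs_pos_eq by (left; apply rr_pos). assert (H := rr_val).
      assert (0 <= Rabs y) by apply Rabs_pos. nra. }
    assert (Ht : Rabs (rr * y / sqrt 2) <= 1/30).
    { rewrite t_of_y. unfold Rdiv. rewrite Rabs_mult, (Rabs_pos_eq (/3)) by lra. lra. }
    destruct (x_small _ Hx Ht) as (_ & HW & HR & HD).
    rewrite t_of_y in *.
    assert (Ht0 : y / 3 <> 0) by lra.
    assert (Hx0 : rr * y <> 0) by (apply Rmult_integral_contrapositive; split; [assert (H := rr_pos); lra|auto]).
    assert (EV : forall j' d', V j' d' y = Hsel (G1p (y/3) (Wf y)) (G2p (y/3) (Wf y)) (G3p (y/3) (Wf y)) (G4p (y/3) (Wf y)) (Wf y) j' d').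
    { intros j' d'. unfold V, Hsel. unfold Wf.
      destruct j' as [|[|[|[|j']]]]; simpl gj; rewrite ?g1_tW, ?g2_tW, ?g3_tW, ?g4_tW by auto;
      rewrite !t_of_y; reflexivity. }
    fold (Wf y) in HW, HR, HD.
    destruct (alg_ids _ _ Ht0 HD HR) as (I1 & I4 & I2 & I3 & I10 & H4 & _).
    rewrite EV. rewrite (T_ext _ _ j d EV).
    rewrite (Hsel_eq (y/3) _ _ _ _ _ I1 I4 I2 I3 I10 H4 j d Hb).
    replace (3 * (y / 3)) with y by field. reflexivity.
Qed.


Lemma pow_le1 : forall a n, 0 <= a <= 1 -> a ^ n <= 1.
Proof.
  intros a n H. induction n as [|n IH]; simpl; [lra|].
  assert (0 <= a ^ n) by (apply pow_le; lra). nra.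
Qed.

Lemma V_bound : forall j d y, base j d -> Rabs y <= 1/10 -> Rabs (V j d y) <= 3.
Proof.
  intros j d y Hb Hy.
  destruct (Req_dec y 0) as [->|Hy0].
  - unfold V, Wf. rewrite Rmult_0_r, zz_0. unfold Rdiv at 1. rewrite Rmult_0_l.
    destruct d as [|d]; simpl; [|rewrite Rmult_0_l, Rmult_0_r, Rabs_R0; lra].
    destruct Hb as [Hj [Hd|Hd]]; [lia|]. rewrite Rmult_1_r.
    destruct j as [|[|[|j]]]; try lia; simpl.
    + rewrite g1_0, Rabs_R1. lra.
    + unfold g2. rewrite zz_0. unfold Rdiv. rewrite Rmult_0_l, Ropp_0, !Rmult_0_l, Rabs_R0. lra.
  - assert (Hx : Rabs (rr * y) <= 1/20).
    { rewrite Rabs_mult, Rabs_pos_eq by (left; apply rr_pos). assert (H := rr_val).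
      assert (0 <= Rabs y) by apply Rabs_pos. nra. }
    assert (Ht : Rabs (rr * y / sqrt 2) <= 1/30).
    { rewrite t_of_y. unfold Rdiv. rewrite Rabs_mult, (Rabs_pos_eq (/3)) by lra. lra. }
    destruct (x_small _ Hx Ht) as (_ & HW & HR & HD).
    rewrite t_of_y in *.
    assert (Ht0 : y / 3 <> 0) by lra.
    assert (Hx0 : rr * y <> 0) by (apply Rmult_integral_contrapositive; split; [assert (H := rr_pos); lra|auto]).
    fold (Wf y) in HW, HR, HD.
    assert (HWd : Rabs (Wf y ^ d) <= 1).
    { rewrite <- RPow_abs. apply pow_le1. split; [apply Rabs_pos|lra]. }
    assert (HG : Rabs (gj j (rr * y)) <= 3).
    { destruct (G_bounds _ _ Ht HW) as (B2 & _ & B4 & B3).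
      destruct j as [|[|[|[|j]]]]; simpl gj;
        rewrite ?g1_tW, ?g2_tW, ?g3_tW, ?g4_tW by auto; rewrite !t_of_y; fold (Wf y); try lra.
      apply G1_bound; auto. }
    unfold V. rewrite Rabs_mult. assert (0 <= Rabs (Wf y ^ d)) by apply Rabs_pos.
    assert (0 <= Rabs (gj j (rr * y))) by apply Rabs_pos. nra.
Qed.

From Stdlib Require Import Reals Lra Lia.
From Coquelicot Require Import Coquelicot.
Open Scope R_scope.

Lemma T_bound_all : forall H B j d, (forall j' d', Rabs (H j' d') <= B) -> Rabs (T H j d) <= 5/3 * B.
Proof.
  intros H B j d HB. unfold T.
  assert (K1 : forall a b, Rabs (1/3 * a + 2/3 * b) <= 1/3 * Rabs a + 2/3 * Rabs b).
  { intros a b. eapply Rle_trans; [apply Rabs_triang|]. rewrite !Rabs_mult, (Rabs_pos_eq (1/3)), (Rabs_pos_eq (2/3)) by lra. lra. }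
  assert (K2 : forall a b, Rabs (-(1/3) * a + 4/3 * b) <= 1/3 * Rabs a + 4/3 * Rabs b).
  { intros a b. eapply Rle_trans; [apply Rabs_triang|]. rewrite !Rabs_mult, Rabs_Ropp, (Rabs_pos_eq (1/3)), (Rabs_pos_eq (4/3)) by lra. lra. }
  destruct d as [|d]; destruct j as [|[|[|[|j]]]];
  (apply (Rle_trans _ _ _ (K1 _ _)) || apply (Rle_trans _ _ _ (K2 _ _)));
  match goal with |- _ * Rabs (H ?a ?b) + _ * Rabs (H ?c ?e) <= _ =>
    pose proof (HB a b); pose proof (HB c e); pose proof (Rabs_pos (H a b)); lra end.
Qed.

Lemma T_bound_base : forall H B j d, 0 <= B -> (forall j' d', base j' d' -> Rabs (H j' d') <= B) ->
  base j d -> Rabs (T H j d) <= 5/3 * B.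
Proof.
  intros H B j d HB0 HB Hb.
  set (H' := fun j' d' => if (match d' with O => orb (j' =? 1)%nat (j' =? 2)%nat | _ => andb (1 <=? j')%nat (j' <=? 4)%nat end) then H j' d' else 0).
  assert (E : T H j d = T H' j d).
  { destruct Hb as [Hj Hd]. unfold T, H'. destruct d as [|d]; destruct j as [|[|[|[|[|j]]]]]; try lia;
    simpl; try reflexivity; destruct d; reflexivity. }
  rewrite E. apply T_bound_all. intros j' d'. unfold H'.
  destruct d' as [|d'].
  - destruct j' as [|[|[|j']]]; simpl; try (rewrite Rabs_R0; lra); apply HB; split; lia.
  - destruct (andb (1 <=? j')%nat (j' <=? 4)%nat) eqn:Ej; [|rewrite Rabs_R0; lra].
    apply andb_prop in Ej. destruct Ej as [E1 E2]. apply Nat.leb_le in E1, E2.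
    apply HB; split; lia.
Qed.

Lemma fG_bound : forall k j d, Rabs (fG k j d) <= (5/3) ^ k.
Proof.
  induction k as [|k IH]; intros j d.
  - simpl. destruct j as [|[|j]]; destruct d; rewrite ?Rabs_R0, ?Rabs_R1; lra.
  - rewrite f_S. simpl pow. apply T_bound_all. auto.
Qed.

Lemma CV_fG : forall j d, Rbar_le (3/5) (CV_radius (fun k => fG k j d)).
Proof.
  intros j d. apply (proj1 (CV_radius_bounded _)). exists 1. intros n.
  rewrite Rabs_mult. assert (H := fG_bound n j d).
  rewrite <- RPow_abs, (Rabs_pos_eq (3/5)) by lra.
  assert (E : (5/3)^n * (3/5)^n = 1) by (rewrite <- Rpow_mult_distr; replace (5/3*(3/5)) with 1 by field; apply pow1).
  assert (0 <= (3/5)^n) by (apply pow_le; lra).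
  assert (0 <= Rabs (fG n j d)) by apply Rabs_pos. nra.
Qed.

Lemma ex_fG : forall j d y, Rabs y <= 1/10 -> ex_pseries (fun k => fG k j d) y.
Proof.
  intros j d y Hy. apply CV_radius_inside. eapply Rbar_lt_le_trans; [|apply CV_fG]. simpl. lra.
Qed.

Definition U (j d : nat) (y : R) : R := PSeries (fun k => fG k j d) y.

Lemma PS_lin : forall a b al be y, ex_pseries a y -> ex_pseries b y ->
  PSeries (fun n => al * a n + be * b n) y = al * PSeries a y + be * PSeries b y.
Proof.
  intros a b al be y Ha Hb.
  rewrite <- !PSeries_scal. rewrite <- PSeries_plus.
  - apply PSeries_ext. intros n. reflexivity.
  - apply ex_pseries_scal; auto. apply Rmult_comm.
  - apply ex_pseries_scal; auto. apply Rmult_comm.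
Qed.

Lemma U_eq : forall j d y, Rabs y <= 1/10 -> U j d y = c0 j d + y * T (fun j' d' => U j' d' y) j d.
Proof.
  intros j d y Hy. unfold U at 1. rewrite PSeries_decr_1 by (apply ex_fG; auto).
  f_equal. try (destruct j as [|[|j]]; destruct d; reflexivity).
  f_equal. unfold PS_decr_1.
    rewrite (PSeries_ext _ (fun n => T (fun j' d' => fG n j' d') j d)) by (intros n; apply f_S).
  unfold T, U. destruct d as [|d]; destruct j as [|[|[|[|j]]]]; apply PS_lin; apply ex_fG; auto.
Qed.

Lemma U_bound : forall j d y, Rabs y <= 1/10 -> Rabs (U j d y) <= 6/5.
Proof.
  intros j d y Hy. unfold U, PSeries.
  assert (Hc : Rbar_lt (Rabs y) (CV_radius (fun k => fG k j d)))
    by (eapply Rbar_lt_le_trans; [|apply CV_fG]; simpl; lra).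
  assert (Ha := CV_disk_inside _ _ Hc).
  eapply Rle_trans; [apply Series_Rabs; auto|].
  assert (Hg : ex_series (fun n => (1/6)^n)) by (apply ex_series_geom; rewrite Rabs_pos_eq; lra).
  eapply Rle_trans; [apply (Series_le _ (fun n => (1/6)^n)); auto|].
  - intros n. split; [apply Rabs_pos|].
    rewrite Rabs_mult, <- RPow_abs. assert (H := fG_bound n j d).
    assert (0 <= Rabs y ^ n) by (apply pow_le, Rabs_pos).
    assert (Rabs y ^ n <= (1/10)^n) by (apply pow_incr; split; [apply Rabs_pos|auto]).
    assert (E : (5/3)^n * (1/10)^n = (1/6)^n) by (rewrite <- Rpow_mult_distr; f_equal; field).
    assert (0 <= (5/3)^n) by (apply pow_le; lra).
    assert (0 <= Rabs (fG n j d)) by apply Rabs_pos. nra.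
  - rewrite Series_geom by (rewrite Rabs_pos_eq; lra). lra.
Qed.

Lemma T_sub : forall H H' j d, T H j d - T H' j d = T (fun a b => H a b - H' a b) j d.
Proof. intros. unfold T. destruct d, j as [|[|[|[|j]]]]; ring. Qed.

Lemma U_eq_V : forall j d y, base j d -> Rabs y <= 1/10 -> U j d y = V j d y.
Proof.
  intros j d y Hb Hy.
  set (D := fun a b => U a b y - V a b y).
  assert (HD : forall a b, base a b -> D a b = y * T D a b).
  { intros a b Hab. unfold D. rewrite U_eq at 1 by auto. rewrite V_eq at 1 by auto.
    rewrite <- T_sub. ring. }
  assert (Hn : forall n a b, base a b -> Rabs (D a b) <= 21/5 * (1/6)^n).
  { induction n as [|n IH]; intros a b Hab.
    - simpl. unfold D. unfold Rminus. eapply Rle_trans; [apply Rabs_triang|]. rewrite Rabs_Ropp.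
      assert (H1 := U_bound a b y Hy). assert (H2 := V_bound a b y Hab Hy). lra.
    - rewrite HD by auto. rewrite Rabs_mult.
      assert (HT := T_bound_base D (21/5 * (1/6)^n) a b ltac:(assert (0 <= (1/6)^n) by (apply pow_le; lra); lra) IH Hab).
      assert (0 <= Rabs (T D a b)) by apply Rabs_pos. assert (0 <= Rabs y) by apply Rabs_pos.
      simpl pow. assert (0 <= (1/6)^n) by (apply pow_le; lra). nra. }
  assert (Z : D j d = 0).
  { destruct (Req_dec (D j d) 0) as [E|E]; auto. exfalso.
    assert (Hp : 0 < Rabs (D j d) / (21/5)) by (apply Rdiv_lt_0_compat; [apply Rabs_pos_lt; auto|lra]).
    destruct (pow_lt_1_zero (1/6) ltac:(rewrite Rabs_pos_eq; lra) _ Hp) as [N HN].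
    specialize (HN N (le_n N)). rewrite Rabs_pos_eq in HN by (apply pow_le; lra).
    specialize (Hn N j d Hb).
    apply (Rmult_lt_compat_l (21/5)) in HN; [|lra].
    replace (21/5 * (Rabs (D j d) / (21/5))) with (Rabs (D j d)) in HN by field. lra. }
  unfold D in Z. lra.
Qed.

From Stdlib Require Import Reals Lra Lia.
From Coquelicot Require Import Coquelicot.
Open Scope R_scope.

Lemma CVlem : forall a M, (forall k, Rabs (a k) <= M * (5/3)^k / rr^k) -> Rbar_le (rr/2) (CV_radius a).
Proof.
  intros a M H. assert (Hr := rr_pos).
  apply (proj1 (CV_radius_bounded _)). exists M. intros n.
  rewrite Rabs_mult, <- RPow_abs, (Rabs_pos_eq (rr/2)) by lra.
  specialize (H n).
  assert (E : M * (5/3)^n / rr^n * (rr/2)^n = M * (5/6)^n).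
  { replace ((5/6)^n) with ((5/3)^n * (1/2)^n) by (rewrite <- Rpow_mult_distr; f_equal; field).
    replace ((rr/2)^n) with (rr^n * (1/2)^n) by (rewrite <- Rpow_mult_distr; f_equal; field).
    field. apply pow_nonzero; lra. }
  assert (0 <= (rr/2)^n) by (apply pow_le; lra).
  assert (0 <= (5/6)^n <= 1) by (split; [apply pow_le; lra|apply pow_le1; lra]).
  assert (0 <= M).
  { pose proof (Rabs_pos (a n)).
    assert (0 < (5/3)^n / rr^n) by (apply Rdiv_lt_0_compat; apply pow_lt; lra).
    destruct (Rle_or_lt 0 M); auto. exfalso.
    assert (M * ((5/3)^n / rr^n) < 0) by nra. unfold Rdiv in *. lra. }
  nra.
Qed.

Definition acoef (j d : nat) (k : nat) : R := sqrt 2 ^ d * fG k j d / rr ^ k.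

Lemma acoef_bound : forall j d k, Rabs (acoef j d k) <= sqrt 2 ^ d * (5/3)^k / rr^k.
Proof.
  intros j d k. unfold acoef. assert (Hr := rr_pos). assert (Hs := s_pos).
  unfold Rdiv. rewrite !Rabs_mult, (Rabs_pos_eq (sqrt 2 ^ d)) by (apply pow_le; lra).
  rewrite (Rabs_pos_eq (/ rr ^ k)) by (left; apply Rinv_0_lt_compat, pow_lt; lra).
  assert (H := fG_bound k j d). assert (0 < / rr ^ k) by (apply Rinv_0_lt_compat, pow_lt; lra).
  assert (0 <= sqrt 2 ^ d) by (apply pow_le; lra). apply Rmult_le_compat_r; [lra|]. apply Rmult_le_compat_l; [lra|auto].
Qed.

Lemma acoef_CV : forall j d, Rbar_le (rr/2) (CV_radius (acoef j d)).
Proof. intros j d. apply (CVlem _ (sqrt 2 ^ d)). intros k. apply acoef_bound. Qed.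

Lemma base_series : forall j d x, base j d -> Rabs x < rr / 10 ->
  gj j x * zz x ^ d = PSeries (acoef j d) x.
Proof.
  intros j d x Hb Hx. assert (Hr := rr_pos). assert (Hs := s_pos).
  assert (Hy : Rabs (x / rr) <= 1/10).
  { unfold Rdiv. rewrite Rabs_mult, (Rabs_pos_eq (/ rr)) by (left; apply Rinv_0_lt_compat; lra).
    apply (Rmult_le_reg_r rr); [lra|]. rewrite Rmult_assoc, Rinv_l by lra. lra. }
  assert (E := U_eq_V j d (x / rr) Hb Hy).
  unfold V, Wf in E. replace (rr * (x / rr)) with x in E by (field; lra).
  assert (E2 : gj j x * zz x ^ d = sqrt 2 ^ d * U j d (x / rr)).
  { rewrite E. unfold Rdiv. rewrite Rpow_mult_distr, pow_inv. field. apply pow_nonzero; lra. }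
  rewrite E2. unfold U, PSeries. rewrite <- Series_scal_l. apply Series_ext. intros k.
  unfold acoef. unfold Rdiv. rewrite Rpow_mult_distr, pow_inv. field. apply pow_nonzero; lra.
Qed.

Lemma Derive_base : forall j d k, base j d ->
  Derive_n (fun x => gj j x * zz x ^ d) k 0 = acoef j d k * INR (Factorial.fact k).
Proof.
  intros j d k Hb. assert (Hr := rr_pos).
  rewrite (Derive_n_ext_loc _ (PSeries (acoef j d))).
  - apply Derive_n_coef. eapply Rbar_lt_le_trans; [|apply acoef_CV]. simpl. lra.
  - assert (He : 0 < rr / 10) by lra. exists (mkposreal _ He). intros x Hx.
    unfold ball in Hx; simpl in Hx; unfold AbsRing_ball, abs, minus, plus, opp in Hx; simpl in Hx.
    rewrite Ropp_0, Rplus_0_r in Hx. apply base_series; auto.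
Qed.

Lemma small_x_facts : forall x, Rabs x < rr / 10 -> x <> 0 ->
  Rabs (x / sqrt 2) <= 1/30 /\ Rabs (zz x / sqrt 2) <= 4 * Rabs (x / sqrt 2) /\
  RelP (x / sqrt 2) (zz x / sqrt 2) = 0 /\ Dp (x / sqrt 2) (zz x / sqrt 2) <> 0 /\ x / sqrt 2 <> 0.
Proof.
  intros x Hx Hx0. assert (Hr := rr_val). assert (Hs := s_bounds).
  assert (H1 : Rabs x <= 1/20) by lra.
  assert (H2 : Rabs (x / sqrt 2) <= 1/30).
  { unfold Rdiv. rewrite Rabs_mult, (Rabs_pos_eq (/ sqrt 2)) by (left; apply Rinv_0_lt_compat; lra).
    apply Rle_trans with ((sqrt 2 / 3 / 10) * / sqrt 2).
    - apply Rmult_le_compat_r; [left; apply Rinv_0_lt_compat; lra|]. unfold rr in Hx. lra.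
    - right. field. apply s_neq0. }
  destruct (x_small x H1 H2) as (A & B & C & D). repeat split; auto.
  unfold Rdiv. apply Rmult_integral_contrapositive; split; [auto|apply Rinv_neq_0_compat, s_neq0].
Qed.

Lemma locally_small : forall (P : R -> Prop), (forall x, Rabs x < rr / 10 -> P x) -> locally 0 P.
Proof.
  intros P H. assert (Hr := rr_pos). assert (He : 0 < rr / 10) by lra. exists (mkposreal _ He).
  intros x Hx. unfold ball in Hx; simpl in Hx; unfold AbsRing_ball, abs, minus, plus, opp in Hx; simpl in Hx.
  rewrite Ropp_0, Rplus_0_r in Hx. apply H; auto.
Qed.

Lemma Derive_40 : forall k,
  Derive_n (fun x => gj 4 x * zz x ^ 0) k 0 = acoef 2 0 k * INR (Factorial.fact k).
Proof.
  intros k. rewrite <- (Derive_base 2 0 k) by (split; lia).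
  apply Derive_n_ext_loc. apply locally_small. intros x Hx. simpl gj.
  destruct (Req_dec x 0) as [->|Hx0].
  - unfold g4, g2. rewrite zz_0. unfold Rdiv. ring.
  - destruct (small_x_facts x Hx Hx0) as (A & B & C & D & E).
    rewrite g4_tW, g2_tW. destruct (alg_ids _ _ E D C) as (_ & _ & _ & _ & _ & H4 & _). rewrite H4. reflexivity.
Qed.

Definition a3 (k : nat) : R := match k with O => 0 | S _ => acoef 1 0 k end.

Lemma Derive_30 : forall k, (1 <= k)%nat ->
  Derive_n (fun x => gj 3 x * zz x ^ 0) k 0 = acoef 1 0 k * INR (Factorial.fact k).
Proof.
  intros k Hk. assert (Hr := rr_pos).
  assert (CV3 : Rbar_le (rr/2) (CV_radius a3)).
  { apply (CVlem _ 1). intros n. destruct n as [|n].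
    - simpl. rewrite Rabs_R0. lra.
    - simpl a3. eapply Rle_trans; [apply acoef_bound|]. simpl pow at 1. lra. }
  rewrite (Derive_n_ext_loc _ (PSeries a3)).
  - rewrite Derive_n_coef. + destruct k; [lia|reflexivity]. + eapply Rbar_lt_le_trans; [|apply CV3]. simpl. lra.
  - apply locally_small. intros x Hx.
    assert (E1 : g3 x = g1 x - 1).
    { destruct (Req_dec x 0) as [->|Hx0].
      - rewrite g1_0. unfold g3. rewrite zz_0. unfold Rdiv. ring.
      - destruct (small_x_facts x Hx Hx0) as (A & B & C & D & E).
        rewrite g3_tW, g1_tW by auto. destruct (alg_ids _ _ E D C) as (_ & _ & _ & _ & _ & _ & H3). exact H3. }
    assert (E2 : g1 x = PSeries (acoef 1 0) x).
    { rewrite <- (base_series 1 0 x) by (auto; split; lia). simpl. ring. }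
    simpl gj. rewrite Rmult_1_r, E1, E2.
    rewrite PSeries_decr_1.
    + rewrite (PSeries_decr_1_aux a3) by reflexivity.
      replace (acoef 1 0 0) with 1 by (unfold acoef; simpl; field).
      assert (PSeries (PS_decr_1 (acoef 1 0)) x = PSeries (PS_decr_1 a3) x) by (apply PSeries_ext; reflexivity).
      rewrite H. ring.
    + apply CV_radius_inside. eapply Rbar_lt_le_trans; [|apply acoef_CV]. simpl. lra.
Qed.

From Stdlib Require Import Reals List Arith Lia Lra.
From Coquelicot Require Import Coquelicot.
Open Scope R_scope.

Lemma Derive_all : forall j d k, (1 <= k)%nat -> (1 <= j <= 4)%nat ->
  Derive_n (fun x => gj j x * zz x ^ d) k 0 = acoef (nt j d) d k * INR (fact k).
Proof.
  intros j d k Hk Hj. destruct d as [|d].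
  - destruct j as [|[|[|[|[|j]]]]]; try lia; simpl nt.
    + apply Derive_base. unfold base; split; [lia|right; lia].
    + apply Derive_base. unfold base; split; [lia|right; lia].
    + apply Derive_30; auto.
    + apply Derive_40.
  - simpl nt. apply Derive_base. unfold base; split; [lia|left; lia].
Qed.

Theorem proposition1 :
  forall (k d j : nat) (A B : oedge),
    (1 <= k)%nat -> (1 <= j <= 4)%nat ->
    valid_oedge A -> valid_oedge B ->
    dist2 (Mid A) (Mid B) = (2 * d)%nat ->
    pair_type j A B ->
    G k B A =
      (sqrt 2 / 3) ^ k * (1 / sqrt 2) ^ d * / INR (fact k)
      * Derive_n (fun x => gj j x * zz x ^ d) k 0.
Proof.
  intros k d j A B Hk Hj HA HB Hd Hp.
  rewrite (comb k A B j d HA HB Hj Hp Hd).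
  rewrite Derive_all by auto. unfold acoef.
  assert (Hs := s_pos). assert (Hr := rr_pos). unfold rr in Hr.
  assert (INR (fact k) <> 0) by apply INR_fact_neq_0.
  assert ((sqrt 2 / 3) ^ k <> 0) by (apply pow_nonzero; lra).
  unfold rr. replace ((1 / sqrt 2) ^ d) with (/ sqrt 2 ^ d) by (unfold Rdiv; rewrite Rmult_1_l, pow_inv; reflexivity).
  field. split; [auto|split; [auto|apply pow_nonzero; lra]].
Qed.
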